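(* Two elements $a,b\in C\ell_{1,2}$, neither of which lies in the center $\mathbb{R}+\mathbb{R}e_7$ of $C\ell_{1,2}$, are similar if and only if $\mathrm{Cre}(a)=\mathrm{Cre}(b)$, $N(a)=N(b)$ and $T(a)=T(b)$.
   Context: $C\ell_{1,2}$ is the real Clifford algebra generated by $i_1,i_2,i_3$ with $i_1^2=1$, $i_2^2=i_3^2=-1$ and $i_ti_m=-i_mi_t$ for $t\neq m$, with real basis $e_0=1$, $e_1=i_1$, $e_2=i_2$, $e_3=i_1i_2$, $e_4=i_3$, $e_5=i_1i_3$, $e_6=i_2i_3$, $e_7=i_1i_2i_3$; its center is $\mathbb{R}+\mathbb{R}e_7$. For $a=\sum_{t=0}^7 a_te_t$ ($a_t\in\mathbb{R}$) define: $\mathrm{Cre}(a)=a_0+a_7e_7$; $N(a)=a_0^2-a_1^2+a_2^2-a_3^2+a_4^2-a_5^2+a_6^2-a_7^2$; $T(a)=a_0a_7+a_2a_5-a_1a_6-a_3a_4$; $P(a)=N(a)^2+4T(a)^2$. Let $Z(C\ell_{1,2})=\{a\in C\ell_{1,2}:P(a)=0\}$. Two elements $a,b\in C\ell_{1,2}$ are called similar if there exists $q\in C\ell_{1,2}\setminus Z(C\ell_{1,2})$ with $qa=bq$. *)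

(* Defs.v *)
From Stdlib Require Import Reals Lra Psatz.
Open Scope R_scope.

(* Elements of the real Clifford algebra Cl_{1,2}, written in the real basis
   e0 = 1, e1 = i1, e2 = i2, e3 = i1 i2, e4 = i3, e5 = i1 i3, e6 = i2 i3,
   e7 = i1 i2 i3, as a = sum_t a_t e_t with coordinates c0 .. c7. *)
Record Cl12 : Type := mkCl {
  c0 : R; c1 : R; c2 : R; c3 : R; c4 : R; c5 : R; c6 : R; c7 : R }.

(* Clifford product, determined by i1^2 = 1, i2^2 = i3^2 = -1,
   i_t i_m = - i_m i_t (t <> m), extended bilinearly. *)
Definition clmul (x y : Cl12) : Cl12 :=
  mkCl
    ( x.(c0) * y.(c0) + x.(c1) * y.(c1) - x.(c2) * y.(c2) + x.(c3) * y.(c3) - x.(c4) * y.(c4) + x.(c5) * y.(c5) - x.(c6) * y.(c6) - x.(c7) * y.(c7))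
    ( x.(c0) * y.(c1) + x.(c1) * y.(c0) + x.(c2) * y.(c3) - x.(c3) * y.(c2) + x.(c4) * y.(c5) - x.(c5) * y.(c4) - x.(c6) * y.(c7) - x.(c7) * y.(c6))
    ( x.(c0) * y.(c2) + x.(c1) * y.(c3) + x.(c2) * y.(c0) - x.(c3) * y.(c1) + x.(c4) * y.(c6) - x.(c5) * y.(c7) - x.(c6) * y.(c4) - x.(c7) * y.(c5))
    ( x.(c0) * y.(c3) + x.(c1) * y.(c2) - x.(c2) * y.(c1) + x.(c3) * y.(c0) - x.(c4) * y.(c7) + x.(c5) * y.(c6) - x.(c6) * y.(c5) - x.(c7) * y.(c4))
    ( x.(c0) * y.(c4) + x.(c1) * y.(c5) - x.(c2) * y.(c6) + x.(c3) * y.(c7) + x.(c4) * y.(c0) - x.(c5) * y.(c1) + x.(c6) * y.(c2) + x.(c7) * y.(c3))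
    ( x.(c0) * y.(c5) + x.(c1) * y.(c4) + x.(c2) * y.(c7) - x.(c3) * y.(c6) - x.(c4) * y.(c1) + x.(c5) * y.(c0) + x.(c6) * y.(c3) + x.(c7) * y.(c2))
    ( x.(c0) * y.(c6) + x.(c1) * y.(c7) + x.(c2) * y.(c4) - x.(c3) * y.(c5) - x.(c4) * y.(c2) + x.(c5) * y.(c3) + x.(c6) * y.(c0) + x.(c7) * y.(c1))
    ( x.(c0) * y.(c7) + x.(c1) * y.(c6) - x.(c2) * y.(c5) + x.(c3) * y.(c4) + x.(c4) * y.(c3) - x.(c5) * y.(c2) + x.(c6) * y.(c1) + x.(c7) * y.(c0))
.

Definition cladd (x y : Cl12) : Cl12 :=
  mkCl (x.(c0) + y.(c0)) (x.(c1) + y.(c1)) (x.(c2) + y.(c2)) (x.(c3) + y.(c3))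
       (x.(c4) + y.(c4)) (x.(c5) + y.(c5)) (x.(c6) + y.(c6)) (x.(c7) + y.(c7)).

Definition clscale (r : R) (x : Cl12) : Cl12 :=
  mkCl (r * x.(c0)) (r * x.(c1)) (r * x.(c2)) (r * x.(c3))
       (r * x.(c4)) (r * x.(c5)) (r * x.(c6)) (r * x.(c7)).

Definition e0 : Cl12 := mkCl 1 0 0 0 0 0 0 0.
Definition i1 : Cl12 := mkCl 0 1 0 0 0 0 0 0.
Definition i2 : Cl12 := mkCl 0 0 1 0 0 0 0 0.
Definition i3 : Cl12 := mkCl 0 0 0 0 1 0 0 0.
Definition e7 : Cl12 := mkCl 0 0 0 0 0 0 0 1.
Definition clneg (x : Cl12) : Cl12 := clscale (-1) x.

Lemma i1_sq : clmul i1 i1 = e0.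
Proof. unfold clmul, i1, e0; simpl; f_equal; ring. Qed.
Lemma i2_sq : clmul i2 i2 = clneg e0.
Proof. unfold clmul, clneg, clscale, i2, e0; simpl; f_equal; ring. Qed.
Lemma i3_sq : clmul i3 i3 = clneg e0.
Proof. unfold clmul, clneg, clscale, i3, e0; simpl; f_equal; ring. Qed.
Lemma i1i2_anti : clmul i1 i2 = clneg (clmul i2 i1).
Proof. unfold clmul, clneg, clscale, i1, i2; simpl; f_equal; ring. Qed.
Lemma i1i3_anti : clmul i1 i3 = clneg (clmul i3 i1).
Proof. unfold clmul, clneg, clscale, i1, i3; simpl; f_equal; ring. Qed.
Lemma i2i3_anti : clmul i2 i3 = clneg (clmul i3 i2).
Proof. unfold clmul, clneg, clscale, i2, i3; simpl; f_equal; ring. Qed.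
Lemma e3_def : clmul i1 i2 = mkCl 0 0 0 1 0 0 0 0.
Proof. unfold clmul, i1, i2; simpl; f_equal; ring. Qed.
Lemma e5_def : clmul i1 i3 = mkCl 0 0 0 0 0 1 0 0.
Proof. unfold clmul, i1, i3; simpl; f_equal; ring. Qed.
Lemma e6_def : clmul i2 i3 = mkCl 0 0 0 0 0 0 1 0.
Proof. unfold clmul, i2, i3; simpl; f_equal; ring. Qed.
Lemma e7_def : clmul (clmul i1 i2) i3 = e7.
Proof. unfold clmul, i1, i2, i3, e7; simpl; f_equal; ring. Qed.
Lemma clmul_assoc x y z : clmul (clmul x y) z = clmul x (clmul y z).
Proof. destruct x, y, z; unfold clmul; simpl; f_equal; ring. Qed.
Lemma e7_central x : clmul e7 x = clmul x e7.
Proof. destruct x; unfold clmul, e7; simpl; f_equal; ring. Qed.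

Definition Cre (a : Cl12) : Cl12 := mkCl a.(c0) 0 0 0 0 0 0 a.(c7).

Definition Nf (a : Cl12) : R :=
  a.(c0)^2 - a.(c1)^2 + a.(c2)^2 - a.(c3)^2 + a.(c4)^2 - a.(c5)^2
  + a.(c6)^2 - a.(c7)^2.

Definition Tf (a : Cl12) : R :=
  a.(c0) * a.(c7) + a.(c2) * a.(c5) - a.(c1) * a.(c6) - a.(c3) * a.(c4).

Definition Pf (a : Cl12) : R := (Nf a)^2 + 4 * (Tf a)^2.

Definition inZ (a : Cl12) : Prop := Pf a = 0.

Definition in_center (a : Cl12) : Prop :=
  exists r s : R, a = cladd (clscale r e0) (clscale s e7).

Definition similar (a b : Cl12) : Prop :=
  exists q : Cl12, ~ inZ q /\ clmul q a = clmul b q.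

(* Main.v *)
Require Import Defs.
From Stdlib Require Import Reals Lra Psatz.
Import Defs.
Open Scope R_scope.

Definition adj (x : Cl12) : Cl12 :=
  mkCl x.(c0) (- x.(c1)) (- x.(c2)) (- x.(c3)) (- x.(c4)) (- x.(c5)) (- x.(c6)) x.(c7).

Lemma q_adj x : clmul x (adj x) = mkCl (Nf x) 0 0 0 0 0 0 (2 * Tf x).
Proof. destruct x; unfold clmul, adj, Nf, Tf; simpl; f_equal; ring. Qed.
Lemma adj_q x : clmul (adj x) x = mkCl (Nf x) 0 0 0 0 0 0 (2 * Tf x).
Proof. destruct x; unfold clmul, adj, Nf, Tf; simpl; f_equal; ring. Qed.
Lemma N_mul x y : Nf (clmul x y) = Nf x * Nf y - 4 * Tf x * Tf y.
Proof. destruct x, y; unfold clmul, Nf, Tf; simpl; ring. Qed.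
Lemma T_mul x y : Tf (clmul x y) = Nf x * Tf y + Tf x * Nf y.
Proof. destruct x, y; unfold clmul, Nf, Tf; simpl; ring. Qed.
Lemma Cre_comm x y : Cre (clmul x y) = Cre (clmul y x).
Proof. destruct x, y; unfold clmul, Cre; simpl; f_equal; ring. Qed.

Definition canon (a : Cl12) : Cl12 :=
  mkCl a.(c0) (- a.(c0)) (-(Nf a + 1)/2) ((1 - Nf a)/2) (- Tf a) (- Tf a) (- a.(c7)) a.(c7).

Definition q1 (a : Cl12) : Cl12 :=
  mkCl (a.(c3)-a.(c2)+1) (a.(c3)-a.(c2)-1) (-(a.(c0)+a.(c1))) (-(a.(c0)+a.(c1)))
       (-(a.(c7)+a.(c6))) (-(a.(c7)+a.(c6))) (a.(c4)-a.(c5)) (a.(c4)-a.(c5)).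
Definition q2 (a : Cl12) : Cl12 :=
  mkCl (a.(c0)-a.(c1)) (a.(c0)-a.(c1)) (-(a.(c2)+a.(c3))+1) (-(a.(c2)+a.(c3))-1)
       (-(a.(c5)+a.(c4))) (-(a.(c5)+a.(c4))) (a.(c7)-a.(c6)) (a.(c7)-a.(c6)).
Definition q3 (a : Cl12) : Cl12 :=
  let rA := a.(c0)-a.(c1)+a.(c3)-a.(c2) in let iA := a.(c7)-a.(c6)+a.(c4)-a.(c5) in
  let rB := a.(c0)+a.(c1)+a.(c2)+a.(c3) in let iB := a.(c7)+a.(c6)+a.(c5)+a.(c4) in
  mkCl (rA+1) (rA-1) (-rB+1) (-rB-1) (-iB) (-iB) iA iA.

Lemma q1_ok a : clmul (q1 a) a = clmul (canon a) (q1 a).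
Proof. destruct a; unfold clmul, q1, canon, Nf, Tf; simpl; f_equal; try field. Qed.
Lemma q2_ok a : clmul (q2 a) a = clmul (canon a) (q2 a).
Proof. destruct a; unfold clmul, q2, canon, Nf, Tf; simpl; f_equal; try field. Qed.
Lemma q3_ok a : clmul (q3 a) a = clmul (canon a) (q3 a).
Proof. destruct a; unfold clmul, q3, canon, Nf, Tf; simpl; f_equal; try field. Qed.
Lemma P1 a : Pf (q1 a) = 16 * ((a.(c3)-a.(c2))^2 + (a.(c4)-a.(c5))^2).
Proof. destruct a; unfold q1, Pf, Nf, Tf; simpl; ring. Qed.
Lemma P2 a : Pf (q2 a) = 16 * ((a.(c3)+a.(c2))^2 + (a.(c4)+a.(c5))^2).
Proof. destruct a; unfold q2, Pf, Nf, Tf; simpl; ring. Qed.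
Lemma P3 a : Pf (q3 a) = 64 * ((a.(c1)+a.(c2))^2 + (a.(c5)+a.(c6))^2).
Proof. destruct a; unfold q3, Pf, Nf, Tf; simpl; ring. Qed.

Lemma mul_scale_r x r y : clmul x (clscale r y) = clscale r (clmul x y).
Proof. destruct x, y; unfold clmul, clscale; simpl; f_equal; ring. Qed.
Lemma mul_scale_l x r y : clmul (clscale r x) y = clscale r (clmul x y).
Proof. destruct x, y; unfold clmul, clscale; simpl; f_equal; ring. Qed.
Lemma e0_l x : clmul e0 x = x.
Proof. destruct x; unfold clmul, e0; simpl; f_equal; ring. Qed.
Lemma e0_r x : clmul x e0 = x.
Proof. destruct x; unfold clmul, e0; simpl; f_equal; ring. Qed.
Lemma cen_comm r s x : clmul (mkCl r 0 0 0 0 0 0 s) x = clmul x (mkCl r 0 0 0 0 0 0 s).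
Proof. destruct x; unfold clmul; simpl; f_equal; ring. Qed.
Lemma DDbar n t : clmul (mkCl n 0 0 0 0 0 0 (2 * t)) (mkCl n 0 0 0 0 0 0 (-2 * t))
  = mkCl (n^2 + 4 * t^2) 0 0 0 0 0 0 0.
Proof. unfold clmul; simpl; f_equal; ring. Qed.
Lemma scale_e0 p : p <> 0 -> clscale (/ p) (mkCl p 0 0 0 0 0 0 0) = e0.
Proof. intro H; unfold clscale, e0; simpl; f_equal; field; auto. Qed.

Definition qinv (q : Cl12) : Cl12 :=
  clscale (/ Pf q) (clmul (adj q) (mkCl (Nf q) 0 0 0 0 0 0 (-2 * Tf q))).

Lemma qinv_r q : Pf q <> 0 -> clmul q (qinv q) = e0.
Proof.
  intro H; unfold qinv. rewrite mul_scale_r, <- clmul_assoc, q_adj, DDbar.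
  apply scale_e0. exact H.
Qed.
Lemma qinv_l q : Pf q <> 0 -> clmul (qinv q) q = e0.
Proof.
  intro H; unfold qinv. rewrite mul_scale_l, clmul_assoc, cen_comm,
    <- clmul_assoc, adj_q, DDbar.
  apply scale_e0. exact H.
Qed.

Lemma P_mul x y : Pf (clmul x y) = Pf x * Pf y.
Proof. unfold Pf; rewrite N_mul, T_mul; ring. Qed.
Lemma P_e0 : Pf e0 = 1.
Proof. unfold Pf, Nf, Tf, e0; simpl; ring. Qed.

Lemma sim_sym a b : similar a b -> similar b a.
Proof.
  intros [q [Hq E]]. unfold inZ in Hq.
  exists (qinv q). split.
  - unfold inZ. intro H0.
    assert (H1 : Pf (clmul (qinv q) q) = 1) by (rewrite qinv_l; [apply P_e0|auto]).
    rewrite P_mul, H0 in H1. lra.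
  - rewrite <- (e0_r (clmul (qinv q) b)), <- (qinv_r q Hq).
    rewrite <- !clmul_assoc. rewrite (clmul_assoc (qinv q) b q), <- E.
    rewrite <- clmul_assoc, qinv_l by auto. rewrite e0_l. reflexivity.
Qed.

Lemma sim_trans a b c : similar a b -> similar b c -> similar a c.
Proof.
  intros [q1 [H1 E1]] [q2 [H2 E2]]. exists (clmul q2 q1). split.
  - unfold inZ in *. rewrite P_mul. intro H. apply Rmult_integral in H. tauto.
  - rewrite clmul_assoc, E1, <- clmul_assoc, E2, clmul_assoc. reflexivity.
Qed.

Lemma sq0 x y : x^2 + y^2 = 0 -> x = 0.
Proof.
  intro H. pose proof (pow2_ge_0 x). pose proof (pow2_ge_0 y).
  assert (x^2 = 0) by lra. destruct (Req_dec x 0); auto.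
  exfalso; apply (pow_nonzero x 2); auto.
Qed.

Lemma sim_canon a : ~ in_center a -> similar a (canon a).
Proof.
  intro Hc.
  destruct (Req_dec (Pf (q1 a)) 0) as [h1|h1].
  2: { exists (q1 a); split; [exact h1| apply q1_ok]. }
  destruct (Req_dec (Pf (q2 a)) 0) as [h2|h2].
  2: { exists (q2 a); split; [exact h2| apply q2_ok]. }
  destruct (Req_dec (Pf (q3 a)) 0) as [h3|h3].
  2: { exists (q3 a); split; [exact h3| apply q3_ok]. }
  exfalso. apply Hc. rewrite P1 in h1. rewrite P2 in h2. rewrite P3 in h3.
  destruct a as [a0 a1 a2 a3 a4 a5 a6 a7]; simpl in *.
  assert (a3 - a2 = 0) by (apply (sq0 _ (a4 - a5)); lra).
  assert (a4 - a5 = 0) by (apply (sq0 _ (a3 - a2)); lra).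
  assert (a3 + a2 = 0) by (apply (sq0 _ (a4 + a5)); lra).
  assert (a4 + a5 = 0) by (apply (sq0 _ (a3 + a2)); lra).
  assert (a1 + a2 = 0) by (apply (sq0 _ (a5 + a6)); lra).
  assert (a5 + a6 = 0) by (apply (sq0 _ (a1 + a2)); lra).
  exists a0, a7. unfold cladd, clscale, e0, e7; simpl. f_equal; lra.
Qed.

Theorem theorem5p1 (a b : Cl12) :
  ~ in_center a -> ~ in_center b ->
  (similar a b <-> (Cre a = Cre b /\ Nf a = Nf b /\ Tf a = Tf b)).
Proof.
  intros Ha Hb. split.
  - intros [q [Hq E]]. unfold inZ in Hq.
    assert (EN := f_equal Nf E). assert (ET := f_equal Tf E).
    rewrite !N_mul in EN. rewrite !T_mul in ET.
    assert (HN : Pf q * (Nf a - Nf b) = 0).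
    { replace (Pf q * (Nf a - Nf b)) with
        (Nf q * ((Nf q * Nf a - 4 * Tf q * Tf a) - (Nf b * Nf q - 4 * Tf b * Tf q))
         + 4 * Tf q * ((Nf q * Tf a + Tf q * Nf a) - (Nf b * Tf q + Tf b * Nf q)))
        by (unfold Pf; ring).
      rewrite EN, ET. ring. }
    assert (HT : Pf q * (Tf a - Tf b) = 0).
    { replace (Pf q * (Tf a - Tf b)) with
        (Nf q * ((Nf q * Tf a + Tf q * Nf a) - (Nf b * Tf q + Tf b * Nf q))
         - Tf q * ((Nf q * Nf a - 4 * Tf q * Tf a) - (Nf b * Nf q - 4 * Tf b * Tf q)))
        by (unfold Pf; ring).
      rewrite EN, ET. ring. }
    apply Rmult_integral in HN. apply Rmult_integral in HT.
    split; [| split; [destruct HN; [contradiction|lra] | destruct HT; [contradiction|lra]]].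
    assert (Eb : b = clmul q (clmul a (qinv q))).
    { rewrite <- (e0_r b), <- (qinv_r q Hq), <- clmul_assoc, <- E, clmul_assoc.
      reflexivity. }
    rewrite Eb, Cre_comm, clmul_assoc, qinv_l, e0_r by exact Hq. reflexivity.
  - intros [HC [HN HT]].
    assert (H0 : a.(c0) = b.(c0)) by (apply (f_equal c0) in HC; exact HC).
    assert (H7 : a.(c7) = b.(c7)) by (apply (f_equal c7) in HC; exact HC).
    assert (Ec : canon a = canon b) by (unfold canon; rewrite H0, H7, HN, HT; reflexivity).
    apply sim_trans with (canon a). apply sim_canon; auto.
    rewrite Ec. apply sim_sym, sim_canon; auto.
Qed.
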